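(* Let $\mathsf N$ be odd and assume the setting below. For every $\lambda\ne0$ with $\mathsf B(\lambda)$ invertible and $\lambda\ne\pm\eta_a^{(h)}$ for all $a,h$, $$\langle t|\mathsf B^{-1}(\lambda)\mathsf A(\lambda)|t'\rangle=\det_{1\le a,b\le\mathsf N}\mathcal U^{(t,t')}_{a,b}(\lambda),$$ where for $b\in\{1,\dots,\mathsf N-1\}$ $$\mathcal U^{(t,t')}_{a,b}(\lambda)=(\eta_a^{(0)})^{2b-1}\sum_{c=1}^{p}q^{(2b-1)c}\frac{Q_{t'}(\eta_a^{(c)})\bar Q_t(\eta_a^{(c)})}{\omega_a(\eta_a^{(c)})},$$ $$\mathcal U^{(t,t')}_{a,\mathsf N}(\lambda)=\frac{(\eta_a^{(0)})^{\mathsf N-1}}{\textsc k}\sum_{h=1}^{p}\frac{q^{(\mathsf N-1)h}\,Q_{t'}(\eta_a^{(h)})\,\bar Q_t(\eta_a^{(h+1)})\,\bar a(\eta_a^{(h)})}{\omega_a(\eta_a^{(h)})\,\big(\lambda/\eta_a^{(h+1)}-\eta_a^{(h+1)}/\lambda\big)}.$$ Consequently, if moreover $\langle t|\mathsf U_n=\varphi_n^{(t)}\langle t|$ and $\mathsf U_n|t'\rangle=\varphi_n^{(t')}|t'\rangle$ with $\varphi_n^{(t')}\ne0$, and $\mathsf u_n=\mathsf U_n\mathsf B^{-1}(\mu_{n,+})\mathsf A(\mu_{n,+})\mathsf U_n^{-1}$, then $\langle t|\mathsf u_n|t'\rangle=\frac{\varphi_n^{(t)}}{\varphi_n^{(t')}}\det_{\mathsf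 N}\mathcal U^{(t,t')}(\mu_{n,+})$.
   Context: Let $p\ge3$ be odd, $q\in\mathbb C$ with $q^p=1$ and $q^2$ a primitive $p$-th root of unity, $\mathsf N$ odd. Let $\eta_1^{(0)},\dots,\eta_{\mathsf N}^{(0)}$ be nonzero, $\eta_a^{(h)}=q^h\eta_a^{(0)}$, with $(\eta_a^{(h)})^2\ne(\eta_b^{(h')})^2$ for $a\ne b$; $\textsc k\ne0$ a constant; $\bar a$ a complex function; $\omega_1,\dots,\omega_{\mathsf N}$ functions nonvanishing at the points $\eta_a^{(h)}$. For $\mathbf h\in(\mathbb Z/p\mathbb Z)^{\mathsf N}$ put $\mathsf b_{\mathbf h}(\lambda)=\textsc k\prod_{a=1}^{\mathsf N}(\lambda/\eta_a^{(h_a)}-\eta_a^{(h_a)}/\lambda)$ and $V_{\mathbf h}=\prod_{1\le b<a\le\mathsf N}((\eta_a^{(h_a)})^2-(\eta_b^{(h_b)})^2)$; $\mathbf e_a$ is the $a$-th unit vector. Operators $\mathsf A(\lambda),\mathsf B(\lambda)$ act on a space $\mathcal R$ with basis $\{|\mathbf h\rangle\}$ (right SOV basis) such that $\mathsf B(\lambda)|\mathbf h\rangle=\mathsf b_{\mathbf h}(\lambda)|\mathbf h\rangle$ and $\mathsf A(\lambda)|\mathbf h\rangle=\sum_{a=1}^{\mathsf N}|\mathbf h+\mathbf e_a\rangle\prod_{b\ne a}\frac{\lambda/\eta_b^{(h_b)}-\eta_b^{(h_b)}/\lambda}{\eta_a^{(h_a)}/\eta_b^{(h_b)}-\eta_b^{(h_b)}/\eta_a^{(h_a)}}\bar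 a(\eta_a^{(h_a)})$; the dual space has covectors $\{\langle\mathbf h|\}$ with $\langle\mathbf h|\mathbf h'\rangle=\delta_{\mathbf h,\mathbf h'}\prod_{b=1}^{\mathsf N}\omega_b(\eta_b^{(h_b)})/V_{\mathbf h}$. Given functions $\bar Q_t$, $Q_{t'}$ define $\langle t|=\sum_{\mathbf h}\prod_{a=1}^{\mathsf N}\bar Q_t(\eta_a^{(h_a)})\,V_{\mathbf h}\,\langle\mathbf h|/\prod_b\omega_b(\eta_b^{(h_b)})$ and $|t'\rangle=\sum_{\mathbf h}\prod_{a=1}^{\mathsf N}Q_{t'}(\eta_a^{(h_a)})\,V_{\mathbf h}\,|\mathbf h\rangle/\prod_b\omega_b(\eta_b^{(h_b)})$ (in the paper $\bar Q_t,Q_{t'}$ solve Baxter equations and these are the left/right transfer-matrix eigenstates). For the consequence: $\mathsf U_n$ is the invertible shift operator of the lattice sine-Gordon chain, $\mathsf u_n$ the local Weyl generator at site $n$, $\mu_{n,+}=i\kappa_nq^{1/2}\xi_n$ with $\mathsf B(\mu_{n,+})$ invertible, and $\textsc k=\prod_{n}\kappa_n/i$. *)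

(* Defs.v *)
From HB Require Import structures.
From mathcomp Require Import all_boot all_order all_algebra.
Set Implicit Arguments. Unset Strict Implicit. Unset Printing Implicit Defensive.
Import Order.TTheory GRing.Theory Num.Theory.
Local Open Scope ring_scope.

(* Right SOV basis labels h in (Z/pZ)^N are {ffun 'I_N -> 'I_p};
   vectors (elements of R) are coordinate functions {ffun {ffun 'I_N -> 'I_p} -> C}
   (v = sum_h v h |h>), covectors likewise (c = sum_h c h <h|). *)

Record sov_data (C : numClosedFieldType) (p N : nat) := SovData {
  sov_q : C;
  sov_eta0 : 'I_N -> C;
  sov_k : C;
  sov_abar : C -> C;
  sov_omega : 'I_N -> C -> C }.

Section SOV.
Variable C : numClosedFieldType.
Variables (p N : nat) (S : sov_data C p N).
Local Notation q := (sov_q S).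
Local Notation eta0 := (sov_eta0 S).
Local Notation kk := (sov_k S).
Local Notation abar := (sov_abar S).
Local Notation omega := (sov_omega S).

Local Notation lab := {ffun 'I_N -> 'I_p}.
Local Notation vec := {ffun lab -> C}.

Definition sov_eta (a : 'I_N) (c : nat) : C := q ^+ c * eta0 a.

Definition etah (h : lab) (a : 'I_N) : C := sov_eta a (h a).

Definition bh (h : lab) (l : C) : C :=
  kk * \prod_(a < N) (l / etah h a - etah h a / l).

Definition Vh (h : lab) : C :=
  \prod_(a < N) \prod_(b < N | (b < a)%N) (etah h a ^+ 2 - etah h b ^+ 2).

Definition Omh (h : lab) : C := \prod_(b < N) omega b (etah h b).

Definition shift (h : lab) (a : 'I_N) : lab :=
  [ffun b => if b == a then ordS (h b) else h b].

Definition ket (h : lab) : vec := [ffun h' => (h' == h)%:R].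

Definition Bop (l : C) (v : vec) : vec := [ffun h => bh h l * v h].

(* coefficient of |h + e_a> in A(lambda)|h> *)
Definition Acoef (l : C) (h : lab) (a : 'I_N) : C :=
  (\prod_(b < N | b != a)
      ((l / etah h b - etah h b / l) / (etah h a / etah h b - etah h b / etah h a)))
  * abar (etah h a).

Definition Aop (l : C) (v : vec) : vec :=
  [ffun h' => \sum_(h : lab) \sum_(a < N) v h * Acoef l h a * ket (shift h a) h'].

(* (sum_h c_h <h|)(sum_h' v_h' |h'>), using <h|h'> = delta_{h,h'} Omh h / Vh h *)
Definition pairing (c v : vec) : C :=
  \sum_(h : lab) c h * v h * (Omh h / Vh h).

Definition leftState (Qb : C -> C) : vec :=
  [ffun h => (\prod_(a < N) Qb (etah h a)) * Vh h / Omh h].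

Definition rightState (Q : C -> C) : vec :=
  [ffun h => (\prod_(a < N) Q (etah h a)) * Vh h / Omh h].

(* U^{(t,t')}_{a,b}(lambda), with 0-based indices a b : 'I_N;
   the paper's column index is b.+1 *)
Definition Uentry (Q Qb : C -> C) (l : C) (a b : 'I_N) : C :=
  if (b.+1 < N)%N then
    eta0 a ^+ (2 * b.+1 - 1) *
      \sum_(1 <= c < p.+1)
        q ^+ ((2 * b.+1 - 1) * c) * Q (sov_eta a c) * Qb (sov_eta a c) / omega a (sov_eta a c)
  else
    eta0 a ^+ (N - 1) / kk *
      \sum_(1 <= h < p.+1)
        (q ^+ ((N - 1) * h) * Q (sov_eta a h) * Qb (sov_eta a h.+1) * abar (sov_eta a h))
        / (omega a (sov_eta a h) * (l / sov_eta a h.+1 - sov_eta a h.+1 / l)).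

Definition Umat (Q Qb : C -> C) (l : C) : 'M[C]_N :=
  \matrix_(a < N, b < N) Uentry Q Qb l a b.

End SOV.

Notation sov_vec C p N := {ffun {ffun 'I_N -> 'I_p} -> C} (only parsing).

(* Main.v *)
Require Import Defs.
From HB Require Import structures.
From mathcomp Require Import all_boot all_order all_algebra.
From mathcomp Require Import ring.
Set Implicit Arguments. Unset Strict Implicit. Unset Printing Implicit Defensive.
Import Order.TTheory GRing.Theory Num.Theory.
Local Open Scope ring_scope.

Section Vand.
Variable F : fieldType.
Variable n : nat.
Implicit Types x w y z : 'I_n.+1 -> F.

Definition Mw x w y : 'M[F]_n.+1 :=
  \matrix_(b, j) if (j < n)%N then w b * x b ^+ j else y b.

Definition cofw x w a := cofactor (Mw x w (fun _ => 0)) a ord_max.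

Lemma lift_max_val (j : 'I_n) : (lift ord_max j : nat) = j.
Proof. by rewrite /= /bump leqNgt ltn_ord. Qed.

Lemma det_lin x w y : \det (Mw x w y) = \sum_a y a * cofw x w a.
Proof.
rewrite (expand_det_col _ ord_max); apply: eq_bigr => a _.
rewrite /Mw mxE ltnn; congr (_ * _); rewrite /cofw /cofactor; congr (_ * \det _).
by apply/matrixP => i j; rewrite !mxE lift_max_val ltn_ord.
Qed.

Lemma cofw_indep x w w' a : (forall b, b != a -> w b = w' b) -> cofw x w a = cofw x w' a.
Proof.
move=> H; rewrite /cofw /cofactor; congr (_ * \det _).
apply/matrixP => i j; rewrite !mxE lift_max_val ltn_ord.
by have /H -> : lift a i != a by rewrite eq_sym neq_lift.
Qed.

Lemma det_scale x w z :
  \det (Mw x w (fun b => w b * z b)) = (\prod_b w b) * \det (Mw x (fun _ => 1) z).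
Proof.
have -> : Mw x w (fun b => w b * z b) = diag_mx (\row_b w b) *m Mw x (fun _ => 1) z.
  by rewrite mul_diag_mx; apply/matrixP => i j; rewrite !mxE; case: ifP; rewrite ?mul1r.
by rewrite det_mulmx det_diag; congr (_ * _); apply: eq_bigr => i _; rewrite mxE.
Qed.

Lemma det_pow0 x (i : nat) : (i < n)%N -> \det (Mw x (fun _ => 1) (fun b => x b ^+ i)) = 0.
Proof.
move=> lt_in; rewrite -det_tr.
have lt_i1 : (i < n.+1)%N by apply: ltnW.
apply: (@determinant_alternate _ _ _ (Ordinal lt_i1) ord_max).
  by rewrite -val_eqE /= neq_ltn lt_in.
by move=> j; rewrite !mxE /= lt_in ltnn mul1r.
Qed.

Definition Vand x := \prod_(a < n.+1) \prod_(b < n.+1 | (b < a)%N) (x a - x b).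

Lemma det_vand x : \det (Mw x (fun _ => 1) (fun b => x b ^+ n)) = Vand x.
Proof.
have -> : Mw x (fun _ => 1) (fun b => x b ^+ n) = (Vandermonde n.+1 (\row_b x b))^T.
  apply/matrixP => i j; rewrite !mxE; case: ifP => [_|]; first by rewrite mul1r.
  by move/negbT; rewrite -leqNgt => hj; have /eqP -> : (j : nat) == n by rewrite eqn_leq hj -ltnS ltn_ord.
rewrite det_tr det_Vandermonde /Vand.
rewrite (exchange_big_dep xpredT) //=; apply: eq_bigr => i _; apply: eq_bigr => j _.
by rewrite !mxE.
Qed.

Lemma det_poly x (P : {poly F}) : size P = n.+1 -> lead_coef P = 1 ->
  \det (Mw x (fun _ => 1) (fun b => P.[x b])) = \det (Mw x (fun _ => 1) (fun b => x b ^+ n)).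
Proof.
move=> sP lP; rewrite det_lin.
have sP' : (size P <= n.+1)%N by rewrite sP.
under eq_bigr => a _ do rewrite (horner_coef_wide _ sP') big_distrl /=.
rewrite exchange_big /= big_ord_recr /= big1 ?add0r.
  rewrite det_lin; apply: eq_bigr => a _.
  have -> : P`_n = 1 by rewrite -lP /lead_coef sP.
  by rewrite mul1r.
move=> i _; under eq_bigr do rewrite -mulrA.
by rewrite -big_distrr /= -det_lin det_pow0 ?mulr0.
Qed.

Lemma count_neq (a : 'I_n.+1) : count (fun b => b != a) (index_enum 'I_n.+1) = n.
Proof.
have := cardC1 a; rewrite card_ord /= => H; rewrite -[RHS]H.
by rewrite cardE /enum_mem size_filter /= /index_enum unlock.
Qed.

Lemma cof1 x a : (forall b c, b != c -> x b != x c) ->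
  cofw x (fun _ => 1) a = Vand x / \prod_(b | b != a) (x a - x b).
Proof.
move=> inj.
pose P := \prod_(b | b != a) ('X - (x b)%:P).
have sP : size P = n.+1 by rewrite /P -big_filter size_prod_XsubC size_filter count_neq.
have lP : lead_coef P = 1 by rewrite lead_coef_prod_XsubC.
have := det_poly x sP lP; rewrite det_vand det_lin (bigD1 a) //= big1 ?addr0; last first.
  move=> b nba; rewrite /P horner_prod (bigD1 b) //= hornerXsubC subrr mul0r mul0r //.
rewrite /P horner_prod => <-.
have nz : \prod_(b | b != a) (x a - x b) != 0.
  by rewrite prodf_seq_neq0; apply/allP => b _; apply/implyP => nba; rewrite subr_eq0 inj // eq_sym.
rewrite (eq_bigr (fun b => x a - x b)); last by move=> b _; rewrite hornerXsubC.
by rewrite [_ * cofw _ _ _]mulrC mulfK.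
Qed.

Lemma sum_delta (a : 'I_n.+1) (f : 'I_n.+1 -> F) : \sum_b (b == a)%:R * f b = f a.
Proof.
rewrite (bigD1 a) //= eqxx mul1r big1 ?addr0 // => b nba.
by case: (b =P a) nba => [-> /eqP //|_ _]; rewrite mul0r.
Qed.

Lemma mainVand x w y : (forall b c, b != c -> x b != x c) ->
  \det (Mw x w y) = \sum_a y a * (\prod_(b | b != a) w b) * (Vand x / \prod_(b | b != a) (x a - x b)).
Proof.
move=> inj; rewrite det_lin; apply: eq_bigr => a _; rewrite -mulrA; congr (_ * _).
pose w' := fun b => if b == a then 1 else w b.
rewrite (@cofw_indep x w w' a); last by move=> b /negbTE; rewrite /w' => ->.
have := det_scale x w' (fun b => (b == a)%:R).
move=> H; rewrite !det_lin in H.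
rewrite (eq_bigr (fun b => (b == a)%:R * (w' b * cofw x w' b))) in H; last by move=> b _; rewrite -mulrA mulrCA.
rewrite !sum_delta /w' eqxx mul1r in H; rewrite H; rewrite cof1 //; congr (_ * _).
rewrite (bigD1 a) //= eqxx mul1r; apply: eq_bigr => b nba.
by case: (b =P a) nba => [-> /eqP //|_ _].
Qed.
End Vand.

Lemma det_sum_rows (F : comNzRingType) m k (E : 'I_m -> 'I_k -> 'I_m -> F) :
  \det (\matrix_(i, j) \sum_(c : 'I_k) E i c j) =
  \sum_(h : {ffun 'I_m -> 'I_k}) \det (\matrix_(i, j) E i (h i) j).
Proof.
rewrite /determinant.
under eq_bigr => s _ do (under eq_bigr => i _ do rewrite mxE; rewrite bigA_distr_bigA big_distrr /=).
rewrite exchange_big /=; apply: eq_bigr => h _; apply: eq_bigr => s _; congr (_ * _).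
by apply: eq_bigr => i _; rewrite mxE.
Qed.

Lemma sum_shift1 (F : zmodType) p (f : nat -> F) : f p = f 0%N ->
  \sum_(1 <= c < p.+1) f c = \sum_(c < p) f c.
Proof.
move=> fp; have H1 := big_nat_recr p 0 f (leq0n p).
have H2 : \sum_(0 <= c < p.+1) f c = f 0%N + \sum_(1 <= c < p.+1) f c by rewrite big_ltn.
rewrite -(big_mkord xpredT); apply: (addrI (f 0%N)); rewrite -H2 H1 fp addrC //.
Qed.


Section Core.
Variables (C : numClosedFieldType) (p n : nat) (S : sov_data C p n.+1) (Q Qb : C -> C) (l : C).
Local Notation q := (sov_q S).
Local Notation eta := (sov_eta S).
Local Notation om := (sov_omega S).
Local Notation kk := (sov_k S).
Local Notation abar := (sov_abar S).
Local Notation lab := {ffun 'I_n.+1 -> 'I_p}.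
Hypothesis hq : q ^+ p = 1.
Hypothesis hp : (0 < p)%N.
Hypothesis heta : forall a, sov_eta0 S a != 0.
Hypothesis hdist : forall (a b : 'I_n.+1) (h h' : nat), a != b -> eta a h ^+ 2 != eta b h' ^+ 2.
Hypothesis homega : forall a h, om a (eta a h) != 0.
Hypothesis hbh : forall h : lab, bh S h l != 0.

Lemma q_neq0 : q != 0.
Proof.
apply/eqP => q0; move: hq; rewrite q0 expr0n -(prednK hp) /= => /eqP.
by rewrite eq_sym oner_eq0.
Qed.

Lemma eta_neq0 a c : eta a c != 0.
Proof. by rewrite /sov_eta mulf_neq0 ?expf_neq0 ?q_neq0 ?heta. Qed.

Lemma eta_mod a c : eta a (c %% p) = eta a c.
Proof. by rewrite /sov_eta expr_mod. Qed.

Lemma etah_shift_a (h : lab) a : etah S (shift h a) a = eta a (h a).+1.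
Proof. by rewrite /etah /shift ffunE eqxx /= eta_mod. Qed.

Lemma etah_shift_b (h : lab) a b : b != a -> etah S (shift h a) b = etah S h b.
Proof. by move=> nba; rewrite /etah /shift ffunE (negbTE nba). Qed.

Lemma kk_neq0 : kk != 0.
Proof. by have := hbh [ffun _ => Ordinal hp]; rewrite /bh mulf_eq0 negb_or => /andP[]. Qed.

Lemma L_neq0 (h : lab) b : l / etah S h b - etah S h b / l != 0.
Proof.
apply/negP => /eqP L0; move: (hbh h); rewrite /bh (bigD1 b) //= L0 mul0r mulr0 eqxx //.
Qed.

Lemma Vh_neq0 (h : lab) : Vh S h != 0.
Proof.
rewrite /Vh; apply/prodf_neq0 => a _; apply/prodf_neq0 => b ba.
rewrite subr_eq0 /etah hdist // eq_sym neq_ltn ba //.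
Qed.

Lemma Om_neq0 (h : lab) : Omh S h != 0.
Proof. by rewrite /Omh; apply/prodf_neq0 => b _; apply: homega. Qed.

Lemma sum_delta_ft (T : finType) (s : T) (f : T -> C) : \sum_t (t == s)%:R * f t = f s.
Proof.
rewrite (bigD1 s) //= eqxx mul1r big1 ?addr0 // => t nts.
by rewrite (negbTE nts) mul0r.
Qed.

Definition Tterm (h : lab) (a : 'I_n.+1) : C :=
  rightState S Q h * Acoef S l h a * (\prod_b Qb (etah S (shift h a) b)) / bh S (shift h a) l.

Lemma lhs_eq : pairing S (leftState S Qb) [ffun h => Aop S l (rightState S Q) h / bh S h l]
  = \sum_(h : lab) \sum_a Tterm h a.
Proof.
rewrite /pairing.
rewrite (eq_bigr (fun h' => (\prod_b Qb (etah S h' b)) * Aop S l (rightState S Q) h' / bh S h' l)); last first.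
  move=> h' _; rewrite !ffunE; have := Vh_neq0 h'; have := Om_neq0 h'.
  move: (Vh S h') (Omh S h') => V O hO hV; field; by rewrite hO hV hbh.
rewrite (eq_bigr (fun h' => \sum_(h : lab) \sum_a (h' == shift h a)%:R *
   (rightState S Q h * Acoef S l h a * (\prod_b Qb (etah S h' b)) / bh S h' l))); last first.
  move=> h' _; rewrite /Aop ffunE big_distrr big_distrl /=; apply: eq_bigr => h _.
  rewrite big_distrr big_distrl /=; apply: eq_bigr => a _; rewrite /ket !ffunE; ring.
rewrite exchange_big /=; apply: eq_bigr => h _; rewrite exchange_big /=; apply: eq_bigr => a _.
by rewrite sum_delta_ft.
Qed.

Definition Ef (a : 'I_n.+1) (c : nat) (j : 'I_n.+1) : C :=
  if (j < n)%N then
    (eta a c * Q (eta a c) * Qb (eta a c) / om a (eta a c)) * (eta a c ^+ 2) ^+ j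
  else
    eta a c ^+ n * Q (eta a c) * Qb (eta a c.+1) * abar (eta a c)
      / (om a (eta a c) * (l / eta a c.+1 - eta a c.+1 / l)) / kk.

Lemma eta_p a : eta a p = eta a 0.
Proof. by rewrite /sov_eta hq expr0. Qed.

Lemma eta_p1 a : eta a p.+1 = eta a 1.
Proof. by rewrite /sov_eta exprS hq mulr1. Qed.

Lemma powfact a k c : sov_eta0 S a ^+ k * q ^+ (k * c) = eta a c ^+ k.
Proof. by rewrite /sov_eta exprMn -exprM mulnC mulrC. Qed.

Lemma Umat_sum : Umat S Q Qb l = \matrix_(a, j) \sum_(c < p) Ef a c j.
Proof.
apply/matrixP => a j; rewrite !mxE /Uentry /Ef ltnS; case: ifP => hj.
  rewrite big_distrr /= (eq_bigr (fun c => Ef a c j)); last first.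
    move=> c _; rewrite /Ef hj !mulrA powfact -exprM.
    have -> : (2 * j.+1 - 1 = (2 * j).+1)%N by rewrite mulnS.
    rewrite exprS; ring.
  rewrite sum_shift1; first by apply: eq_bigr => c _; rewrite /Ef hj.
  by rewrite /Ef eta_p eta_p1.
rewrite subn1 /= big_distrr /= (eq_bigr (fun c => Ef a c j)); last first.
  move=> c _; rewrite /Ef hj -(powfact a n c) (mulnC n); ring.
rewrite sum_shift1; first by apply: eq_bigr => c _; rewrite /Ef hj.
by rewrite /Ef eta_p eta_p1.
Qed.

Definition x0 (h : lab) b := etah S h b ^+ 2.
Definition w0 (h : lab) b := etah S h b * Q (etah S h b) * Qb (etah S h b) / om b (etah S h b).
Definition g0 (h : lab) a := Ef a (h a) ord_max.

Lemma rhs_eq : \det (Umat S Q Qb l) = \sum_(h : lab) \sum_a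
   g0 h a * (\prod_(b | b != a) w0 h b) * (Vh S h / \prod_(b | b != a) (x0 h a - x0 h b)).
Proof.
rewrite Umat_sum det_sum_rows; apply: eq_bigr => h _.
have -> : \matrix_(a, j) Ef a (h a) j = Mw (x0 h) (w0 h) (g0 h).
  apply/matrixP => a j; rewrite !mxE /g0 /Ef /x0 /w0 /etah ltnn; by case: ifP.
rewrite mainVand //.
by move=> b c nbc; rewrite /x0 /etah hdist.
Qed.

Lemma prod_const_neq (a : 'I_n.+1) (c : C) : \prod_(b | b != a) c = c ^+ n.
Proof.
rewrite prodr_const.
have H := cardC1 a; rewrite card_ord /= in H; rewrite -[in RHS]H.
by apply: congr1; apply: eq_card => b; rewrite !inE.
Qed.

Lemma Tterm_eq (h : lab) a : Tterm h a =
  g0 h a * (\prod_(b | b != a) w0 h b) * (Vh S h / \prod_(b | b != a) (x0 h a - x0 h b)).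
Proof.
have e1 : \prod_b Q (etah S h b) = Q (etah S h a) * \prod_(b | b != a) Q (etah S h b) by rewrite (bigD1 a).
have e2 : Omh S h = om a (etah S h a) * \prod_(b | b != a) om b (etah S h b) by rewrite /Omh (bigD1 a).
have e3 : \prod_b Qb (etah S (shift h a) b) = Qb (eta a (h a).+1) * \prod_(b | b != a) Qb (etah S h b).
  by rewrite (bigD1 a) //= etah_shift_a; congr (_ * _); apply: eq_bigr => b nba; rewrite etah_shift_b.
have e4 : \prod_b (l / etah S (shift h a) b - etah S (shift h a) b / l) =
   (l / eta a (h a).+1 - eta a (h a).+1 / l) * \prod_(b | b != a) (l / etah S h b - etah S h b / l).
  by rewrite (bigD1 a) //= etah_shift_a; congr (_ * _); apply: eq_bigr => b nba; rewrite etah_shift_b.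
rewrite /Tterm /rightState ffunE /Acoef /bh e1 e2 e3 e4 prodf_div.
set ea := etah S h a.
have ea0 : ea != 0 by apply: eta_neq0.
have key : \prod_(b | b != a) (Q (etah S h b) * Qb (etah S h b) / om b (etah S h b)
      / (ea / etah S h b - etah S h b / ea))
    = (\prod_(b | b != a) w0 h b) * ea ^+ n / \prod_(b | b != a) (x0 h a - x0 h b).
  rewrite -(prod_const_neq a ea) -big_split /= -prodf_div; apply: eq_bigr => b nba.
  have eb0 : etah S h b != 0 by apply: eta_neq0.
  have ob0 : om b (etah S h b) != 0 by apply: homega.
  have xd : ea ^+ 2 - etah S h b ^+ 2 != 0 by rewrite subr_eq0 /ea /etah hdist // eq_sym.
  by rewrite /w0 /x0 -/ea; field; rewrite xd ob0 ea0 eb0.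
have key2 : (\prod_(b | b != a) Q (etah S h b)) * (\prod_(b | b != a) Qb (etah S h b))
   / (\prod_(b | b != a) om b (etah S h b)) / \prod_(b | b != a) (ea / etah S h b - etah S h b / ea)
    = (\prod_(b | b != a) w0 h b) * ea ^+ n / \prod_(b | b != a) (x0 h a - x0 h b).
  by rewrite -key !prodf_div big_split.
have PL0 : \prod_(b | b != a) (l / etah S h b - etah S h b / l) != 0.
  by apply/prodf_neq0 => b _; apply: L_neq0.
have Pom0 : \prod_(b | b != a) om b (etah S h b) != 0.
  by apply/prodf_neq0 => b _; apply: homega.
have L'0 : l / eta a (h a).+1 - eta a (h a).+1 / l != 0.
  by have := L_neq0 (shift h a) a; rewrite etah_shift_a.
have oa0 : om a ea != 0 by apply: homega.
have kk0 := kk_neq0.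
have PX0 : \prod_(b | b != a) (x0 h a - x0 h b) != 0.
  apply/prodf_neq0 => b nba; rewrite subr_eq0 /x0 /etah hdist // eq_sym //.
move: key2; set PQ := \prod_(b | b != a) Q _; set PQb := \prod_(b | b != a) Qb _.
set Pom := \prod_(b | b != a) om b _; set PD := \prod_(b | b != a) (ea / _ - _).
set PL := \prod_(b | b != a) (l / _ - _); set Pw := \prod_(b | b != a) w0 h b.
set PX := \prod_(b | b != a) (x0 h a - x0 h b) => key2.
have PD0 : PD != 0.
  apply/prodf_neq0 => b nba.
  have eb0 : etah S h b != 0 by apply: eta_neq0.
  have -> : ea / etah S h b - etah S h b / ea = (ea ^+ 2 - etah S h b ^+ 2) / (ea * etah S h b).
    by field; rewrite ea0 eb0.
  apply: mulf_neq0; last by rewrite invr_neq0 // mulf_neq0.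
  by rewrite subr_eq0 /ea /etah hdist // eq_sym.
set L' := l / eta a (h a).+1 - eta a (h a).+1 / l.
transitivity (Q ea * Vh S h * abar ea * Qb (eta a (h a).+1) / (om a ea * kk * L') * (PQ * PQb / Pom / PD)).
  by field; rewrite PD0 PL0 Pom0 oa0 kk0 L'0.
rewrite key2 /g0 /Ef /= ltnn.
change (eta a (h a)) with ea; rewrite -/L'.
by field; rewrite PX0 oa0 kk0 L'0.
Qed.

Lemma core : pairing S (leftState S Qb) [ffun h => Aop S l (rightState S Q) h / bh S h l]
  = \det (Umat S Q Qb l).
Proof.
rewrite lhs_eq rhs_eq; apply: eq_bigr => h _; apply: eq_bigr => a _; exact: Tterm_eq.
Qed.
End Core.

Section Aux.
Variables (C : numClosedFieldType) (p N : nat) (S : sov_data C p N).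

Lemma Binv_eq (l : C) (Binv : {ffun {ffun 'I_N -> 'I_p} -> C} -> {ffun {ffun 'I_N -> 'I_p} -> C}) v :
  (forall h, bh S h l != 0) -> cancel (Bop S l) Binv ->
  Binv v = [ffun h => v h / bh S h l].
Proof.
move=> hb c1; have E : Bop S l [ffun h => v h / bh S h l] = v.
  by apply/ffunP => h; rewrite !ffunE mulrC divfK.
by rewrite -{1}E c1.
Qed.

Lemma bh_of_inv (l : C) (Binv : {ffun {ffun 'I_N -> 'I_p} -> C} -> {ffun {ffun 'I_N -> 'I_p} -> C}) :
  cancel (Bop S l) Binv -> forall h, bh S h l != 0.
Proof.
move=> c1 h; apply/negP => /eqP b0.
have e : Bop S l (@ket C p N h) = Bop S l [ffun _ => 0].
  apply/ffunP => h'; rewrite !ffunE mulr0.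
  by case: eqP => [->|_]; [rewrite b0 mul0r | rewrite mulr0].
have := congr1 Binv e; rewrite !c1 => /ffunP /(_ h); rewrite !ffunE eqxx => /eqP.
by rewrite oner_eq0.
Qed.

Lemma pairing_lin (Qb : C -> C) (l c : C) (v : {ffun {ffun 'I_N -> 'I_p} -> C}) :
  pairing S (leftState S Qb) [ffun h => Aop S l [ffun h => c * v h] h / bh S h l]
  = c * pairing S (leftState S Qb) [ffun h => Aop S l v h / bh S h l].
Proof.
have Alin : Aop S l [ffun h => c * v h] = [ffun h => c * Aop S l v h].
  apply/ffunP => h; rewrite !ffunE mulr_sumr; apply: eq_bigr => h0 _.
  rewrite mulr_sumr; apply: eq_bigr => a _; rewrite ffunE; ring.
rewrite Alin /pairing mulr_sumr; apply: eq_bigr => h _; rewrite !ffunE; ring.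
Qed.
End Aux.

Unset Implicit Arguments.
Theorem mainTheorem8
  (C : numClosedFieldType) (p N : nat) (q : C) (eta0 : 'I_N -> C) (kk : C)
  (abar : C -> C) (omega : 'I_N -> C -> C) (Q Qb : C -> C) :
  let S := SovData p q eta0 kk abar omega in
  let tL := leftState S Qb in
  let tR := rightState S Q in
  (3 <= p)%N -> odd p ->
  q ^+ p = 1 -> p.-primitive_root (q ^+ 2) ->
  odd N ->
  (forall a : 'I_N, eta0 a != 0) ->
  (forall (a b : 'I_N) (h h' : nat), a != b -> sov_eta S a h ^+ 2 != sov_eta S b h' ^+ 2) ->
  kk != 0 ->
  (forall (a : 'I_N) (h : nat), omega a (sov_eta S a h) != 0) ->
  (* main identity *)
  (forall (l : C) (Binv : sov_vec C p N -> sov_vec C p N),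
      l != 0 ->
      cancel (Bop S l) Binv -> cancel Binv (Bop S l) ->
      (forall (a : 'I_N) (h : nat), l != sov_eta S a h /\ l != - sov_eta S a h) ->
      pairing S tL (Binv (Aop S l tR)) = \det (Umat S Q Qb l))
  /\
  (* consequence for u_n = U_n B^{-1}(mu) A(mu) U_n^{-1} *)
  (forall (mu : C) (Binv U Uinv : sov_vec C p N -> sov_vec C p N) (phit phit' : C),
      cancel (Bop S mu) Binv -> cancel Binv (Bop S mu) ->
      (forall (c : C) (u v : sov_vec C p N), U [ffun h => c * u h + v h] = [ffun h => c * U u h + U v h]) ->
      cancel U Uinv -> cancel Uinv U ->
      (forall v : sov_vec C p N, pairing S tL (U v) = phit * pairing S tL v) ->
      U tR = [ffun h => phit' * tR h] ->
      phit' != 0 ->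
      pairing S tL (U (Binv (Aop S mu (Uinv tR)))) = phit / phit' * \det (Umat S Q Qb mu)).
Proof.
move=> S tL tR p3 _ hq _ oddN heta hdist kk0 homega.
destruct N as [|n]; first by [].
have hp : (0 < p)%N by apply: leq_trans p3.
split.
  move=> l Binv l0 c1 _ hl.
  have hb : forall h, bh S h l != 0.
    move=> h; rewrite /bh mulf_neq0 //; apply/prodf_neq0 => b _.
    have e0 : etah S h b != 0 by rewrite /etah; apply: (@eta_neq0 _ _ _ S hq hp heta).
    have -> : l / etah S h b - etah S h b / l = (l - etah S h b) * (l + etah S h b) / (l * etah S h b).
      by field; rewrite l0 e0.
    have [h1 h2] := hl b (h b).
    apply: mulf_neq0; last by rewrite invr_neq0 // mulf_neq0.
    by apply: mulf_neq0; [rewrite subr_eq0 | rewrite addr_eq0].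
  by rewrite (Binv_eq _ hb c1); apply: (@core _ _ _ S Q Qb l hq hp heta hdist homega hb).
move=> mu Binv U Uinv phit phit' c1 _ hlin cU cUi hphit hUtR phit0.
have hb := bh_of_inv c1.
set z : sov_vec C p n.+1 := [ffun _ => 0].
have Uz : U z = z.
  have := hlin 1 z z.
  have -> : [ffun h => 1 * z h + z h] = z by apply/ffunP => h; rewrite !ffunE mul1r addr0.
  move=> /ffunP E; apply/ffunP => h; move: (E h); rewrite !ffunE mul1r => e.
  by apply: (addrI (U z h)); rewrite addr0 -e.
have UiR : Uinv tR = [ffun h => phit'^-1 * tR h].
  have E := hlin phit'^-1 tR z.
  have e1 : [ffun h => phit'^-1 * tR h + z h] = [ffun h => phit'^-1 * tR h].
    by apply/ffunP => h; rewrite !ffunE addr0.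
  have e2 : [ffun h => phit'^-1 * U tR h + U z h] = tR.
    by apply/ffunP => h; rewrite Uz hUtR !ffunE addr0 mulKf.
  by rewrite -{1}e2 -E e1 cU.
rewrite hphit UiR (Binv_eq _ hb c1) pairing_lin (@core _ _ _ S Q Qb mu hq hp heta hdist homega hb).
by rewrite mulrA.
Qed.
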